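(* Let $R$ be a $*$-ring. Then the following are equivalent: (1) $R$ is strongly $J$-$*$-clean. (2) $R$ is uniquely clean and $R$ is strongly $*$-clean. (3) $R$ is uniquely strongly $*$-clean. (4) $R$ is uniquely $J$-$*$-clean. (5) For any $a\in R$, there exists a unique idempotent $e\in R$ such that $a-e\in U(R)$, $ae=ea$, $ae^*=e^*a$ and $e-e^*\in J(R)$.
   Context: All rings are associative with identity. A $*$-ring is a ring $R$ with an involution $*$, i.e. a map $a\mapsto a^*$ with $(a+b)^*=a^*+b^*$, $(ab)^*=b^*a^*$, $(a^* )^*=a$. $U(R)$ denotes the group of units and $J(R)$ the Jacobson radical of $R$. A projection is an element $e$ with $e^2=e=e^*$. $R$ is strongly $J$-$*$-clean if every $a\in R$ can be written $a=e+u$ with $e$ a projection, $u\in J(R)$ and $ae=ea$. $R$ is strongly $*$-clean if every $a\in R$ can be written $a=e+u$ with $e$ a projection, $u\in U(R)$ and $eu=ue$. $R$ is uniquely clean if every element of $R$ can be written uniquely as the sum of an idempotent and a unit. $R$ is uniquely strongly $*$-clean if for every $a\in R$ there exists a unique projection $e\in R$ such that $a-e\in U(R)$ and $ae=ea$. $R$ is uniquely $J$-$*$-clean if for every $a\in R$ there exists a unique projection $e\in R$ such that $a-e\in J(R)$. *)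

(* Defs.v *)
From HB Require Import structures.
From mathcomp Require Import all_boot all_algebra.
Set Implicit Arguments. Unset Strict Implicit. Unset Printing Implicit Defensive.
Import GRing.Theory.
Local Open Scope ring_scope.

(* Rings are associative with identity; we allow any pzRingType
   (possibly the zero ring), and define units as two-sided invertible. *)
Section StarRing.
Variable R : pzRingType.

Definition is_unit (a : R) : Prop := exists b : R, a * b = 1 /\ b * a = 1.

Definition is_involution (star : R -> R) : Prop :=
  [/\ forall a b, star (a + b) = star a + star b,
      forall a b, star (a * b) = star b * star a &
      forall a, star (star a) = a].

Definition left_ideal (L : R -> Prop) : Prop :=
  [/\ L 0, (forall x y, L x -> L y -> L (x - y)) &
      (forall r x, L x -> L (r * x))].

Definition maximal_left_ideal (L : R -> Prop) : Prop :=
  [/\ left_ideal L, ~ L 1 &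
      forall M : R -> Prop, left_ideal M -> ~ M 1 ->
        (forall x, L x -> M x) -> forall x, M x -> L x].

Definition in_jacobson (a : R) : Prop :=
  forall L : R -> Prop, maximal_left_ideal L -> L a.

Definition idempotent (e : R) : Prop := e * e = e.

Definition projection (star : R -> R) (e : R) : Prop := e * e = e /\ star e = e.

Definition strongly_J_star_clean (star : R -> R) : Prop :=
  forall a : R, exists e : R,
    [/\ projection star e, in_jacobson (a - e) & a * e = e * a].

Definition strongly_star_clean (star : R -> R) : Prop :=
  forall a : R, exists e : R, exists u : R,
    [/\ a = e + u, projection star e, is_unit u & e * u = u * e].

Definition uniquely_clean : Prop :=
  forall a : R, exists e : R, exists u : R,
    [/\ a = e + u, idempotent e, is_unit u &
        forall e' u' : R, a = e' + u' -> idempotent e' -> is_unit u' ->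
          e' = e /\ u' = u].

Definition uniquely_strongly_star_clean (star : R -> R) : Prop :=
  forall a : R, exists! e : R,
    [/\ projection star e, is_unit (a - e) & a * e = e * a].

Definition uniquely_J_star_clean (star : R -> R) : Prop :=
  forall a : R, exists! e : R, projection star e /\ in_jacobson (a - e).

Definition condition5 (star : R -> R) : Prop :=
  forall a : R, exists! e : R,
    [/\ idempotent e, is_unit (a - e), a * e = e * a,
        a * star e = star e * a & in_jacobson (e - star e)].

End StarRing.

(* Main.v *)
From HB Require Import structures.
From mathcomp Require Import all_boot all_algebra.
From mathcomp Require Import boolp classical_sets.
Require Import Defs.
Set Implicit Arguments. Unset Strict Implicit. Unset Printing Implicit Defensive.
Import GRing.Theory.
Local Open Scope ring_scope.

Section Jac.
Variable R : pzRingType.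

Lemma li_opp (L : R -> Prop) x : left_ideal L -> L x -> L (- x).
Proof. by move=> [L0 LB LM] Lx; rewrite -sub0r; apply: LB. Qed.

Lemma li_add (L : R -> Prop) x y : left_ideal L -> L x -> L y -> L (x + y).
Proof.
move=> HL Lx Ly; have := HL; case=> L0 LB LM; rewrite -[y]opprK; apply: LB => //.
by apply: li_opp.
Qed.

Lemma exists_maximal (I : R -> Prop) : left_ideal I -> ~ I 1 ->
  exists L, maximal_left_ideal L /\ forall x, I x -> L x.
Proof.
move=> HI nI1.
pose Q (X : R -> Prop) := [/\ left_ideal X, ~ X 1 & forall x, I x -> X x].
pose P (X : set R) := (forall z, ~ X z) \/ Q X.
have [|A [PA Amax]] := @Zorn_bigcup R P.
  move=> F FP Ftot.
  case: (pselect (exists X, F X /\ Q X)) => [[X0 [FX0 QX0]]|nQ]; last first.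
    left=> z [X FX Xz]; case: (FP X FX) => [h|QX]; first exact: (h z).
    by apply: nQ; exists X.
  have memQ : forall X z, F X -> X z -> Q X.
    by move=> X z FX Xz; case: (FP X FX) => // h; case: (h z).
  right; split.
  - split.
    + by exists X0 => //; case: QX0 => [[]].
    + move=> x y [X1 FX1 X1x] [X2 FX2 X2y].
      case: (Ftot X1 X2 FX1 FX2) => sub.
        exists X2 => //; case: (memQ X2 y FX2 X2y) => [[_ LB _] _ _].
        by apply: LB => //; apply: sub.
      exists X1 => //; case: (memQ X1 x FX1 X1x) => [[_ LB _] _ _].
      by apply: LB => //; apply: sub.
    + move=> r x [X1 FX1 X1x]; exists X1 => //.
      by case: (memQ X1 x FX1 X1x) => [[_ _ LM] _ _]; apply: LM.
  - move=> [X1 FX1 X1x]; by case: (memQ X1 1 FX1 X1x).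
  - by move=> x Ix; exists X0 => //; case: QX0 => _ _; apply.
have QI : Q I by split.
case: PA => [A0|QA].
  exfalso; apply: (Amax I) => //; [split|by right].
    by move=> x Ax; case: (A0 x).
  by move=> h; case: HI => I0 _ _; apply: (A0 0); apply: h.
case: QA => LA nA1 IA; exists A; split => //; split => // M HM nM1 AM x Mx.
apply/not_notP => nAx.
apply: (Amax M); first by split => // h; apply: nAx; apply: h.
by right; split => // y Iy; apply: AM; apply: IA.
Qed.

Local Notation J := (@in_jacobson R).

Lemma J0 : J 0.
Proof. by move=> L [[]]. Qed.

Lemma JB x y : J x -> J y -> J (x - y).
Proof. by move=> Jx Jy L HL; case: (HL) => [[_ LB _] _ _]; apply: LB; [apply: Jx|apply: Jy]. Qed.

Lemma JN x : J x -> J (- x).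
Proof. by move=> Jx; rewrite -sub0r; apply: JB => //; apply: J0. Qed.

Lemma JD x y : J x -> J y -> J (x + y).
Proof. by move=> Jx Jy; rewrite -[y]opprK; apply: JB => //; apply: JN. Qed.

Lemma JMl r x : J x -> J (r * x).
Proof. by move=> Jx L HL; case: (HL) => [[_ _ LM] _ _]; apply: LM; apply: Jx. Qed.

Lemma JMr x r : J x -> J (x * r).
Proof.
move=> Jx L HL; have := HL; case=> [[L0 LB LM] nL1 Lmax].
case: (pselect (L r)) => Lr; first by apply: LM.
pose L' := fun y => L (y * r).
suff ML' : maximal_left_ideal L' by apply: (Jx L' ML').
have LI' : left_ideal L'.
  split; rewrite /L'; first by rewrite mul0r.
    by move=> y z Ly Lz; rewrite mulrBl; apply: LB.
  by move=> s y Ly; rewrite -mulrA; apply: LM.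
split => //; first by rewrite /L' mul1r.
move=> M HM nM1 L'M m Mm.
pose N := fun z => exists y l, [/\ M y, L l & z = y * r + l].
have HN : left_ideal N.
  split.
  - by exists 0, 0; split => //; [case: HM|rewrite mul0r addr0].
  - move=> z1 z2 [y1 [l1 [My1 Ll1 ->]]] [y2 [l2 [My2 Ll2 ->]]].
    exists (y1 - y2), (l1 - l2); split; [by case: HM => _ + _; apply| by apply: LB|].
    by rewrite mulrBl opprD addrACA.
  - move=> s z [y [l [My Ll ->]]]; exists (s * y), (s * l); split.
    + by case: HM => _ _; apply.
    + by apply: LM.
    + by rewrite mulrDr mulrA.
case: (pselect (N 1)) => [[y [l [My Ll e1]]]|nN1].
  exfalso; apply: nM1.
  have Mry : M (r * y) by case: HM => _ _; apply.
  have M1ry : M (1 - r * y).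
    apply: L'M; rewrite /L' mulrBl mul1r -mulrA.
    have -> : y * r = 1 - l by rewrite e1 addrK.
    by rewrite mulrBr mulr1 opprB addrC subrK; apply: LM.
  by rewrite -(subrK (r * y) 1); apply: li_add.
have NL : forall x, N x -> L x.
  apply: Lmax => // l Ll; exists 0, l; split => //; last by rewrite mul0r add0r.
  by case: HM.
by apply: NL; exists m, 0; split => //; rewrite addr0.
Qed.

Lemma J_leftinv j : J j -> exists b, b * (1 - j) = 1.
Proof.
move=> Jj; apply/not_notP => nb.
pose I := fun z => exists s, z = s * (1 - j).
have HI : left_ideal I.
  split; first by exists 0; rewrite mul0r.
    by move=> _ _ [s1 ->] [s2 ->]; exists (s1 - s2); rewrite mulrBl.
  by move=> r _ [s ->]; exists (r * s); rewrite mulrA.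
have nI1 : ~ I 1 by move=> [s e]; apply: nb; exists s.
have [L [ML IL]] := exists_maximal HI nI1.
have L1j : L (1 - j) by apply: IL; exists 1; rewrite mul1r.
have Lj : L j by apply: Jj.
case: ML => LL nL1 _; apply: nL1.
by rewrite -(subrK j 1); apply: li_add.
Qed.

Lemma J_unit j : J j -> is_unit (1 - j).
Proof.
move=> Jj; have [b hb] := J_leftinv Jj.
have eb : b = 1 - (- (b * j)).
  by rewrite opprK -{1}hb mulrBr mulr1 subrK.
have [c hc] : exists c, c * b = 1.
  by rewrite eb; apply: J_leftinv; apply: JN; apply: JMl.
have ec : c = 1 - j by rewrite -[c]mulr1 -{1}hb mulrA hc mul1r.
by exists b; split => //; rewrite -ec.
Qed.

Lemma J_unitD j : J j -> is_unit (1 + j).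
Proof. by move=> Jj; rewrite -[j]opprK; apply: J_unit; apply: JN. Qed.

Lemma J_of_units a : (forall r, is_unit (1 - r * a)) -> J a.
Proof.
move=> H L [[L0 LB LM] nL1 Lmax]; apply/not_notP => nLa.
pose M := fun z => exists l s, L l /\ z = l + s * a.
have HM : left_ideal M.
  split; first by exists 0, 0; rewrite mul0r addr0.
    move=> _ _ [l1 [s1 [Ll1 ->]]] [l2 [s2 [Ll2 ->]]].
    exists (l1 - l2), (s1 - s2); split; first exact: LB.
    by rewrite mulrBl opprD addrACA.
  move=> r _ [l [s [Ll ->]]]; exists (r * l), (r * s); split; first exact: LM.
  by rewrite mulrDr mulrA.
case: (pselect (M 1)) => [[l [s [Ll e1]]]|nM1].
  have [v [_ hv]] := H s.
  have el : l = 1 - s * a by rewrite e1 addrK.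
  by apply: nL1; rewrite -hv -el; apply: LM.
apply: nLa; apply: (Lmax M HM nM1) => [x Lx|]; first by exists x, 0; rewrite mul0r addr0.
by exists 0, 1; rewrite mul1r add0r.
Qed.

Lemma J_idem e : idempotent e -> J e -> e = 0.
Proof.
move=> He Je; have [v [h1 h2]] := J_unit Je.
have : e * (1 - e) = 0 by rewrite mulrBr mulr1 He subrr.
by move=> h; rewrite -[e]mulr1 -h1 mulrA h mul0r.
Qed.

Lemma subr0' (x : R) : x - 0 = x. Proof. by rewrite oppr0 addr0. Qed.
Lemma sub0r' (x : R) : 0 - x = - x. Proof. by rewrite add0r. Qed.

Lemma unit_mul (u v : R) : is_unit u -> is_unit v -> is_unit (u * v).
Proof.
move=> [u' [h1 h2]] [v' [k1 k2]]; exists (v' * u'); split.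
  by rewrite mulrA -(mulrA u) k1 mulr1.
by rewrite mulrA -(mulrA v') h2 mulr1.
Qed.

Lemma unit_sq (y : R) : y * y = 1 -> is_unit y.
Proof. by move=> h; exists y. Qed.

Lemma unit_nil (x : R) : x * x = 0 -> is_unit (1 + x).
Proof.
move=> h; exists (1 - x); split.
  by rewrite mulrBr mulr1 mulrDl mul1r h addr0 addrK.
by rewrite mulrDr mulr1 mulrBl mul1r h subr0' subrK.
Qed.

Lemma unit_inv_cancel (u x : R) : is_unit u -> u * x = 0 -> x = 0.
Proof. by move=> [w [_ h]] e; rewrite -[x]mul1r -h -mulrA e mulr0. Qed.

Lemma unit_inv_cancelr (u x : R) : is_unit u -> x * u = 0 -> x = 0.
Proof. by move=> [w [h _]] e; rewrite -[x]mulr1 -h mulrA e mul0r. Qed.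

Lemma idem_1B (e : R) : idempotent e -> idempotent (1 - e).
Proof. by rewrite /idempotent => h; rewrite mulrBr mulr1 mulrBl mul1r h subrr subr0'. Qed.

Lemma idem_B1 (e : R) : idempotent e -> e * (1 - e) = 0.
Proof. by rewrite /idempotent => h; rewrite mulrBr mulr1 h subrr. Qed.

Lemma idem_1B1 (e : R) : idempotent e -> (1 - e) * e = 0.
Proof. by rewrite /idempotent => h; rewrite mulrBl mul1r h subrr. Qed.

Lemma idem_sym (e : R) : idempotent e -> (e + e - 1) * (e + e - 1) = 1.
Proof.
rewrite /idempotent => h.
rewrite mulrBr mulr1 !mulrBl !mulrDr !mulrDl h mul1r opprB.
by rewrite addrK addrC subrK.
Qed.

Lemma comm_idem_mul (g f : R) : idempotent g -> idempotent f -> g * f = f * g ->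
  idempotent (g * f).
Proof.
rewrite /idempotent => hg hf c.
by rewrite mulrA -(mulrA g f g) -c mulrA hg -mulrA hf.
Qed.

Lemma comm_idem_eq (g f : R) : idempotent g -> idempotent f -> g * f = f * g ->
  J (g - f) -> g = f.
Proof.
move=> hg hf c Jgf.
have key : forall a b : R, idempotent a -> idempotent b -> a * b = b * a ->
    J (a - b) -> a = a * b.
  move=> a b ha hb cab Jab.
  have e1 : a * (1 - b) = a * (a - b) by rewrite !mulrBr mulr1 ha.
  have Jy : J (a * (1 - b)) by rewrite e1; apply: JMl.
  have Iy : idempotent (a * (1 - b)).
    apply: comm_idem_mul => //; first exact: idem_1B.
    by rewrite mulrBr mulrBl mulr1 mul1r cab.
  have := J_idem Iy Jy; rewrite mulrBr mulr1 => /eqP; rewrite subr_eq0.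
  by move/eqP.
rewrite (key g f) //; apply/esym; rewrite c; apply: key => //.
by rewrite -opprB; apply: JN.
Qed.

Lemma comm_idem_unit (g f : R) : idempotent g -> idempotent f -> g * f = f * g ->
  is_unit (g - f) -> g = 1 - f.
Proof.
move=> hg hf c U.
have gf0 : g * f = 0.
  apply: (unit_inv_cancelr U).
  by rewrite mulrBr -(mulrA g f g) -c mulrA hg -mulrA hf subrr.
have c' : (1 - f) * g = g * (1 - f) by rewrite mulrBr mulrBl mulr1 mul1r c.
have z : (1 - g) * (1 - f) = 0.
  apply: (unit_inv_cancelr U).
  by rewrite -mulrA mulrBr c' idem_1B1 // subr0' mulrA idem_1B1 // mul0r.
move: z; rewrite mulrBl mul1r mulrBr mulr1 gf0 subr0' => /eqP.
by rewrite subr_eq0 => /eqP <-.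
Qed.

Lemma central_pt (g r : R) : g * r * (1 - g) = 0 -> (1 - g) * r * g = 0 ->
  g * r = r * g.
Proof.
move=> h1 h2.
have -> : g * r = g * r * g.
  by rewrite -{1}[g * r]mulr1 -(subrK g 1) mulrDr h1 add0r.
have {2}-> : r = (1 - g) * r + g * r by rewrite mulrBl mul1r subrK.
by rewrite mulrDl h2 add0r.
Qed.

Lemma compl_of_prod (g f : R) : g * f = 0 -> (1 - g) * (1 - f) = 0 -> g = 1 - f.
Proof.
move=> gf0 z; move: z; rewrite mulrBl mul1r mulrBr mulr1 gf0 subr0' => /eqP.
by rewrite subr_eq0 => /eqP <-.
Qed.

Lemma Jkill (u j z : R) : is_unit u -> J j -> idempotent z -> u * z = j * z -> z = 0.
Proof.
move=> [w [_ hw]] Jj hz e; apply: J_idem => //.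
by rewrite -[z]mul1r -hw -mulrA e mulrA; apply: JMr; apply: JMl.
Qed.

Lemma subBB (x y z : R) : (x - y) - (x - z) = z - y.
Proof. by rewrite opprB addrC addrA subrK. Qed.

Lemma central_of_corner0 :
  (forall g r : R, idempotent g -> g * r * (1 - g) = 0) ->
  forall g r : R, idempotent g -> g * r = r * g.
Proof.
move=> key g r hg.
have h1 := key g r hg.
have h2 := key (1 - g) r (idem_1B hg); rewrite subKr in h2.
have -> : g * r = g * r * g.
  by rewrite -{1}[g * r]mulr1 -(subrK g 1) mulrDr h1 add0r.
have {2}-> : r = (1 - g) * r + g * r by rewrite mulrBl mul1r subrK.
by rewrite mulrDl h2 add0r.
Qed.

Lemma corner_nil (g r : R) : idempotent g ->
  let x := g * r * (1 - g) in [/\ g * x = x, x * g = 0, x * x = 0 & idempotent (g + x)].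
Proof.
move=> hg x.
have gx : g * x = x by rewrite /x !mulrA hg.
have xg : x * g = 0 by rewrite /x -mulrA idem_1B1 // mulr0.
have xx : x * x = 0 by rewrite {2}/x mulrA mulrA xg !mul0r.
by split => //; rewrite /idempotent mulrDl !mulrDr hg gx xg xx !addr0.
Qed.

Variable star : R -> R.
Hypothesis Hstar : is_involution star.

Lemma star_add x y : star (x + y) = star x + star y.
Proof. by case: Hstar. Qed.
Lemma star_mul x y : star (x * y) = star y * star x.
Proof. by case: Hstar. Qed.
Lemma star_inv x : star (star x) = x.
Proof. by case: Hstar. Qed.
Lemma star0 : star 0 = 0.
Proof.
have h := star_add 0 0; rewrite addr0 in h.
by apply: (addrI (star 0)); rewrite -h addr0.
Qed.
Lemma starN x : star (- x) = - star x.
Proof. by apply: (addrI (star x)); rewrite -star_add !subrr star0. Qed.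
Lemma starB x y : star (x - y) = star x - star y.
Proof. by rewrite star_add starN. Qed.
Lemma star1 : star 1 = 1.
Proof. by rewrite -[star 1]mulr1 -{2}(star_inv 1) -star_mul mulr1 star_inv. Qed.
Lemma star_unit u : is_unit u -> is_unit (star u).
Proof.
move=> [w [h1 h2]]; exists (star w); split.
  by rewrite -star_mul h2 star1.
by rewrite -star_mul h1 star1.
Qed.
Lemma J_star a : J a -> J (star a).
Proof.
move=> Ja; apply: J_of_units => r.
have U : is_unit (1 - a * star r) by apply: J_unit; apply: JMr.
by have := star_unit U; rewrite starB star1 star_mul star_inv.
Qed.
Lemma star_idem g : idempotent g -> idempotent (star g).
Proof. by rewrite /idempotent => h; rewrite -star_mul h. Qed.

Lemma central_of_proj :
  (forall g : R, idempotent g -> star g = g) ->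
  forall g r : R, idempotent g -> g * r = r * g.
Proof.
move=> P; apply: central_of_corner0 => g r hg.
have [gx xg xx hh] := corner_nil r hg.
set x := g * r * (1 - g) in gx xg xx hh *.
have sx : star x = x.
  have := P _ hh; rewrite star_add (P _ hg) => /addrI.
  done.
rewrite -gx -sx /x !star_mul starB star1 (P _ hg).
by rewrite !mulrA idem_B1 // !mul0r.
Qed.

Lemma mk2 :
  (forall g : R, idempotent g -> star g = g) ->
  (forall a : R, exists e, [/\ idempotent e, is_unit (a - e) &
      forall e', idempotent e' -> is_unit (a - e') -> e' = e]) ->
  uniquely_clean R /\ strongly_star_clean star.
Proof.
move=> Hp H; have Hc := central_of_proj Hp.
split => a; have [e [he Ue Uq]] := H a.
  exists e, (a - e); split => //; first by rewrite addrC subrK.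
  move=> e' u' Ha he' Uu'.
  have ae : a - e' = u' by rewrite Ha addrAC subrr add0r.
  have ee : e' = e by apply: Uq => //; rewrite ae.
  by split => //; rewrite -ae ee.
exists e, (a - e); split => //; first by rewrite addrC subrK.
  by split => //; apply: Hp.
by rewrite mulrBr mulrBl (Hc e a he).
Qed.

Lemma P3_2 : uniquely_strongly_star_clean star ->
  uniquely_clean R /\ strongly_star_clean star.
Proof.
move=> H.
have Hp : forall g : R, idempotent g -> star g = g.
  move=> g hg; have [f [[[pf1 pf2] Uf Cf] _]] := H g.
  by rewrite (comm_idem_unit hg pf1 Cf Uf) starB star1 pf2.
have Hc := central_of_proj Hp.
apply: mk2 => // a; have [e [[[pe1 pe2] Ue Ce] Uq]] := H a.
exists e; split => // e' he' Ue'; apply/esym; apply: Uq; split => //.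
  by split => //; apply: Hp.
by rewrite (Hc e' a he').
Qed.

Lemma P5_2 : condition5 star -> uniquely_clean R /\ strongly_star_clean star.
Proof.
move=> H.
have Hp : forall g : R, idempotent g -> star g = g.
  move=> g hg; have [e [[he Ue Ce Cs Je] _]] := H g.
  have ge := comm_idem_unit hg he Ce Ue.
  have ee : e = 1 - g by rewrite ge subKr.
  rewrite ee starB star1 in Cs Je.
  rewrite subBB in Je.
  move: Cs; rewrite mulrBr mulrBl mulr1 mul1r => Cs.
  have C : star g * g = g * star g by apply: oppr_inj; apply: (addrI g).
  exact: (comm_idem_eq (star_idem hg) hg C Je).
have Hc := central_of_proj Hp.
apply: mk2 => // a; have [e [[he Ue Ce Cs Je] Uq]] := H a.
exists e; split => // e' he' Ue'; apply/esym; apply: Uq; split => //.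
- by rewrite (Hc e' a he').
- by rewrite (Hp e' he') (Hc e' a he').
- by rewrite (Hp e' he') subrr; apply: J0.
Qed.

Lemma P1_props : strongly_J_star_clean star ->
  (forall g : R, idempotent g -> star g = g) /\
  (forall g r : R, idempotent g -> g * r = r * g).
Proof.
move=> H.
have Hp : forall g : R, idempotent g -> star g = g.
  move=> g hg; have [e [[pe1 pe2] Je Ce]] := H g.
  by rewrite (comm_idem_eq hg pe1 Ce Je).
by split => //; apply: central_of_proj.
Qed.

Lemma P1_3 : strongly_J_star_clean star -> uniquely_strongly_star_clean star.
Proof.
move=> H; have [Hp Hc] := P1_props H.
move=> a; have [e [[pe1 pe2] Je Ce]] := H a.
have hf := idem_1B pe1.
exists (1 - e); split.
  split.
  - by split => //; rewrite starB star1 pe2.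
  - have -> : a - (1 - e) = (e + e - 1) * (1 + (e + e - 1) * (a - e)).
      rewrite mulrDr mulr1 mulrA idem_sym //.
      by rewrite mul1r [RHS]addrC -!addrA addKr opprB.
    apply: unit_mul; first exact: unit_sq (idem_sym pe1).
    by apply: J_unitD; apply: JMl.
  - by rewrite (Hc _ a hf).
move=> f [[pf1 pf2] Uf Cf].
have cef : e * f = f * e by apply: Hc.
have z1 : e * f = 0.
  apply: (Jkill Uf Je (comm_idem_mul pe1 pf1 cef)).
  by rewrite !mulrA !mulrBl -cef -(mulrA e f f) pf1 pe1.
have z2 : (1 - e) * (1 - f) = 0.
  have hf' := idem_1B pf1.
  have c2 : (1 - e) * (1 - f) = (1 - f) * (1 - e) by apply: Hc.
  apply: (Jkill Uf Je (comm_idem_mul hf hf' c2)).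
  rewrite !mulrA !mulrBl (Hc f (1 - e) pf1) -(mulrA (1 - e) f) idem_B1 // mulr0.
  by rewrite idem_B1 // !mul0r.
by rewrite (compl_of_prod z1 z2) subKr.
Qed.

Lemma P1_4 : strongly_J_star_clean star -> uniquely_J_star_clean star.
Proof.
move=> H; have [Hp Hc] := P1_props H.
move=> a; have [e [[pe1 pe2] Je Ce]] := H a.
exists e; split; first by split.
move=> f [[pf1 pf2] Jf]; apply: (comm_idem_eq pe1 pf1 (Hc e f pe1)).
by rewrite -(subBB a); apply: JB.
Qed.

Lemma P1_5 : strongly_J_star_clean star -> condition5 star.
Proof.
move=> H; have [Hp Hc] := P1_props H; have H3 := P1_3 H.
move=> a; have [f [[[pf1 pf2] Uf Cf] Uq]] := H3 a.
exists f; split.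
  by split => //; rewrite pf2 // subrr; apply: J0.
move=> e [he Ue Ce _ _]; apply: Uq; split => //; split => //; exact: Hp.
Qed.

Lemma id1 (g x : R) : 1 - g + (g + g - 1 + x) = g + x.
Proof. by rewrite addrA addrACA (addrC 1) addrACA addrK subrr addr0. Qed.
Lemma id2 (h : R) : 1 - h + (h + h - 1) = h.
Proof. by rewrite addrACA (addrC 1) addrACA addrK subrr addr0. Qed.

Lemma uc_uniq : uniquely_clean R -> forall z e1 u1 e2 u2 : R,
  z = e1 + u1 -> idempotent e1 -> is_unit u1 ->
  z = e2 + u2 -> idempotent e2 -> is_unit u2 -> e1 = e2.
Proof.
move=> H z e1 u1 e2 u2 z1 h1 U1 z2 h2 U2.
have [e [u [_ _ _ Uq]]] := H z.
by rewrite (Uq e1 u1 z1 h1 U1).1 (Uq e2 u2 z2 h2 U2).1.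
Qed.

Lemma uc_central : uniquely_clean R -> forall g r : R, idempotent g -> g * r = r * g.
Proof.
move=> H; apply: central_of_corner0 => g r hg.
have [gx xg xx hh] := corner_nil r hg.
set x := g * r * (1 - g) in gx xg xx hh *.
have E : 1 - g = 1 - (g + x).
  apply: (uc_uniq H (z := g + x) (u1 := (g + g - 1) * (1 + x))
            (u2 := (g + x) + (g + x) - 1)).
  - rewrite mulrDr mulr1 mulrBl mulrDl mul1r gx addrK.
    by rewrite id1.
  - exact: idem_1B.
  - by apply: unit_mul; [apply: unit_sq; apply: idem_sym | apply: unit_nil].
  - by rewrite id2.
  - exact: idem_1B.
  - by apply: unit_sq; apply: idem_sym.
by apply: (addrI g); rewrite addr0; apply: oppr_inj; apply: (addrI 1); rewrite E.
Qed.

Lemma dedekind (s t : R) : (forall g r : R, idempotent g -> g * r = r * g) ->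
  t * s = 1 -> s * t = 1.
Proof.
move=> Hab ts.
have hq : idempotent (s * t) by rewrite /idempotent mulrA -(mulrA s t s) ts mulr1.
have q1 : t * (s * t) * s = 1.
  by rewrite mulrA ts mul1r ts.
by move: q1; rewrite -(Hab _ t hq) -mulrA ts mulr1.
Qed.

Lemma corner_mul (f a b : R) : (forall X : R, f * X = X * f) -> idempotent f ->
  (1 - f + f * a) * (1 - f + f * b) = 1 - f + f * (a * b).
Proof.
move=> cf hf.
have gf : (1 - f) * f = 0 by apply: idem_1B1.
have fg : f * (1 - f) = 0 by apply: idem_B1.
have hg : (1 - f) * (1 - f) = 1 - f := idem_1B hf.
set g := 1 - f in gf fg hg *; clearbody g.
rewrite mulrDl !mulrDr hg (mulrA g f b) gf mul0r addr0.
rewrite (cf a) -(mulrA a f g) fg mulr0 add0r.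
by rewrite -(mulrA a f (f * b)) (mulrA f f b) hf (mulrA a f b) -(cf a) -mulrA.
Qed.

Lemma uc_unitJ : uniquely_clean R ->
  (forall a : R, exists e u, [/\ a = e + u, idempotent e & is_unit u]) ->
  forall u : R, is_unit u -> J (u - 1).
Proof.
move=> H Hex u Uu; have Hab := uc_central H.
apply: J_of_units => r.
have [f [v [ey hf Uv]]] := Hex (1 - r * (u - 1)).
have cf : forall X : R, f * X = X * f by move=> X; apply: Hab.
have [v' [vv' v'v]] := Uv; have [u' [uu' u'u]] := Uu.
have s1 : f * r * (1 - u) = f * v.
  have fy : f * (1 - r * (u - 1)) = f + f * v by rewrite ey mulrDr hf.
  move: fy; rewrite mulrBr mulr1 -!mulrN opprB mulrA => fy.
  by apply: (addrI f); rewrite -fy.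
have k : f * (v' * r * (1 - u)) = f.
  rewrite -(mulrA v' r) (mulrA f v') (cf v') -(mulrA v' f) (mulrA f r) s1.
  by rewrite (mulrA v' f v) -(cf v') -(mulrA f v') v'v mulr1.
set Z := 1 - f + f * (1 - u).
have UZ : is_unit Z.
  have l : (1 - f + f * (v' * r)) * Z = 1.
    by rewrite /Z corner_mul // k subrK.
  by exists (1 - f + f * (v' * r)); split => //; apply: dedekind.
have UZf : is_unit (Z - f).
  have -> : Z - f = 1 - f + f * (- u).
    by rewrite /Z mulrBr mulr1 mulrN -addrA (addrAC f (- (f * u)) (- f)) subrr add0r.
  exists (1 - f + f * (- u')); split; rewrite corner_mul // mulrNN.
    by rewrite uu' mulr1 subrK.
  by rewrite u'u mulr1 subrK.
have f0 : (0 : R) = f.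
  apply: (uc_uniq H (z := Z) (u1 := Z) (u2 := Z - f)) => //.
  - by rewrite add0r.
  - by rewrite /idempotent mul0r.
  - by rewrite addrC subrK.
by rewrite ey -f0 add0r.
Qed.

Lemma id3 (e u : R) : e + u - (1 - e) = u - 1 + (e + e).
Proof. rewrite opprB (addrC e u) -!addrA; congr (u + _). by rewrite addrA addrC. Qed.

Lemma P2_1 : uniquely_clean R /\ strongly_star_clean star -> strongly_J_star_clean star.
Proof.
move=> [H Hs]; have Hab := uc_central H.
have Hex : forall a : R, exists e u, [/\ a = e + u, idempotent e & is_unit u].
  by move=> a; have [e [u [? ? ? _]]] := H a; exists e, u.
have Hunit := uc_unitJ H Hex.
have J2 : J (1 + 1 : R).
  have m1 : (-1 : R) * (-1) = 1 by rewrite mulrNN mulr1.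
  have := Hunit (-1) (unit_sq m1); rewrite -opprD => /JN.
  by rewrite opprK.
move=> a; have [e [u [Ha [pe1 pe2] Uu Ceu]]] := Hs a.
exists (1 - e); split.
- by split; [exact: idem_1B | rewrite starB star1 pe2].
- rewrite Ha id3; have -> : e + e = e * (1 + 1) by rewrite mulrDr mulr1.
  by apply: JD; [apply: Hunit | apply: JMl].
- by rewrite (Hab _ a (idem_1B pe1)).
Qed.

Lemma kap (e r : R) :
  (forall p q, projection star p -> projection star q -> J (p - q) -> p = q) ->
  (forall a b : R, J (a * b - b * a)) ->
  e * e = e -> star e = e -> e * r * (1 - e) = 0.
Proof.
move=> Huq Hcomm pe1 pe2.
have [gx xg xx hh] := corner_nil r pe1.
have Jx : J (e * r * (1 - e)).
  have -> : e * r * (1 - e) = e * (e * r - r * e) * (1 - e).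
    rewrite [in RHS](mulrBr e) [in RHS]mulrBl (mulrA e e r) pe1 -(mulrA e (r * e)) -(mulrA r e) idem_B1 //.
    by rewrite mulr0 mulr0 subr0'.
  by apply: JMr; apply: JMl.
set x := e * r * (1 - e) in gx xg xx hh Jx *.
clearbody x.
set y := star x.
have Jy : J y by apply: J_star.
have sy : star y = x by rewrite /y star_inv.
have ey : e * y = 0 by rewrite /y -pe2 -star_mul xg star0.
have ye : y * e = y by rewrite /y -{1}pe2 -star_mul gx.
set c := 1 + x * y.
have [w [cw wc]] : is_unit c by apply: J_unitD; apply: JMr.
have ce : c * e = e * c.
  by rewrite /c mulrDl mulrDr mul1r mulr1 -mulrA ye mulrA gx.
have sc : star c = c by rewrite /c star_add star1 star_mul sy.
have gg : (e + x) * (e + y) = e * c.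
  by rewrite mulrDl !mulrDr pe1 ey xg addr0 add0r mulr1 mulrA gx.
have Jw1 : J (w - 1).
  have -> : w - 1 = - (w * (x * y)).
    by rewrite -[w - 1]opprK opprB -{1}wc /c mulrDr mulr1 addrAC subrr add0r.
  by apply: JN; apply: JMl; apply: JMr.
clearbody c.
have we : w * e = e * w.
  by rewrite -[w * e]mulr1 -cw mulrA -(mulrA w e c) -ce mulrA wc mul1r.
have sw : star w = w.
  have h : star w * c = 1 by rewrite -sc -star_mul cw star1.
  by rewrite -[star w]mulr1 -cw mulrA h mul1r.
have k1 : w * (e * c) * w = w * e by rewrite mulrA -(mulrA (w * e) c w) cw mulr1.
have sandwich : forall A B G : R, A * B * G * (A * B * G) = A * (B * (G * A) * B) * G.
  by move=> A B G; rewrite !mulrA.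
have Pp : projection star ((e + y) * w * (e + x)).
  split.
    rewrite sandwich gg k1 we mulrA.
    by rewrite (mulrDl e y e) pe1 ye.
  by rewrite !star_mul !star_add pe2 sy sw mulrA.
have Jp : J ((e + y) * w * (e + x) - e).
  have -> : (e + y) * w * (e + x) - e = ((e * (w - 1) * e) + e * w * x) + y * w * (e + x).
    rewrite (mulrDl e y w) (mulrDl (e * w) (y * w)) addrAC; congr (_ + _).
    rewrite mulrBr mulr1 mulrBl pe1 mulrDr addrAC.
    by [].
  apply: JD; last by apply: JMr; apply: JMr.
  by apply: JD; [apply: JMr; apply: JMl | apply: JMl].
have pe := Huq _ _ Pp (conj pe1 pe2) Jp.
have gp : (e + x) * ((e + y) * w * (e + x)) = e + x.
  by rewrite !mulrA gg -(mulrA e c w) cw mulr1 mulrDr pe1 gx.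
have ge : (e + x) * e = e by rewrite mulrDl pe1 xg addr0.
move: gp; rewrite pe ge => /esym h.
by apply: (addrI e); rewrite addr0.
Qed.

Lemma id4 (a e : R) : e * e = e -> a * a - a = (a - e) * a + e * (a - e) - (a - e).
Proof.
by move=> pe1; rewrite mulrBl mulrBr pe1 addrA subrK opprB addrA subrK.
Qed.
Lemma id5 (r s : R) : (r + s) * (r + s) - (r + s) = (r * r - r) + (s * s - s) + (r * s + s * r).
Proof.
rewrite mulrDl !mulrDr opprD (addrACA (r*r) (-r)) (addrAC (r*r + s*s)) (addrACA (r*r) (s*s)) (addrC (s*s)).
by [].
Qed.
Lemma id6 (r s : R) : r * s - s * r = (r * s + s * r) - s * r * (1 + 1).
Proof. by rewrite mulrDr mulr1 opprD addrA addrK. Qed.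

Lemma P4_1 : uniquely_J_star_clean star -> strongly_J_star_clean star.
Proof.
move=> H.
have Huq : forall p q, projection star p -> projection star q -> J (p - q) -> p = q.
  move=> p q Pp Pq Jpq; have [e [_ Uq]] := H p.
  have Jpp : J (p - p) by rewrite subrr; apply: J0.
  by rewrite -(Uq p (conj Pp Jpp)) (Uq q (conj Pq Jpq)).
have Hbool : forall a : R, J (a * a - a).
  move=> a; have [e [[[pe1 pe2] Je] _]] := H a.
  rewrite (id4 a pe1); apply: JB => //; apply: JD; [exact: JMr | exact: JMl].
have J2 : J (1 + 1 : R).
  by have := Hbool (-1); rewrite mulrNN mulr1 opprK.
have Hcomm : forall r s : R, J (r * s - s * r).
  move=> r s; rewrite id6; apply: JB; last exact: JMl.
  have h : J (- ((r * r - r) + (s * s - s)) + ((r + s) * (r + s) - (r + s))).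
    by apply: JD; [apply: JN; apply: JD; apply: Hbool | apply: Hbool].
  by rewrite id5 addKr in h.
move=> a; have [e [[[pe1 pe2] Je] _]] := H a.
exists e; split => //.
have pf1 : (1 - e) * (1 - e) = 1 - e := idem_1B pe1.
have pf2 : star (1 - e) = 1 - e by rewrite starB star1 pe2.
have h1 := kap a Huq Hcomm pe1 pe2.
have h2 := kap a Huq Hcomm pf1 pf2; rewrite subKr in h2.
by rewrite (central_pt h1 h2).
Qed.
End Jac.

Theorem theorem3p2 (R : pzRingType) (star : R -> R) (Hstar : is_involution star) :
  [<-> strongly_J_star_clean star;
       uniquely_clean R /\ strongly_star_clean star;
       uniquely_strongly_star_clean star;
       uniquely_J_star_clean star;
       condition5 star].
Proof.
tfae.
- by move=> h; apply: (P3_2 Hstar); apply: (P1_3 Hstar).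
- by move=> h; apply: (P1_3 Hstar); apply: (P2_1 Hstar).
- by move=> h; apply: (P1_4 Hstar); apply: (P2_1 Hstar); apply: (P3_2 Hstar).
- by move=> h; apply: (P1_5 Hstar); apply: (P4_1 Hstar).
- by move=> h; apply: (P2_1 Hstar); apply: (P5_2 Hstar).
Qed.
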